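(* Let $\Omega_\star$ be a discrete filtered set centred at $\omega\in\mathbb{C}$. Then the direct limit $\Omega^\infty_\star=\varinjlim_n \sum_{n\ast}\Omega_\star$ of its iterated fine sums is a discrete filtered set centred at $\omega$.
   Context: A discrete filtered set centred at $\omega$ is a family $\Omega_\star=(\Omega_L)_{L>0}$ of finite subsets of $\mathbb{C}$ with $\Omega_L\subset D(\omega,L)$ (open disc) for every $L>0$, $\Omega_{L_1}\subseteq\Omega_{L_2}$ whenever $L_1\le L_2$, and $\Omega_L=\{\omega\}$ for all sufficiently small $L>0$. The fine sum of two discrete filtered sets centred at $\omega$ is given by $(\Omega_\star\ast\Omega'_\star)_L=\{-\omega+\omega_1+\omega_2:\omega_1\in\Omega_{L_1},\omega_2\in\Omega'_{L_2},L_1+L_2=L\}$. $\sum_{n\ast}\Omega_\star$ denotes the $n$-fold fine sum $\Omega_\star\ast\cdots\ast\Omega_\star$; for each $L$ these form a direct system via the inclusions $(\sum_{n\ast}\Omega_\star)_L\hookrightarrow(\sum_{(n+1)\ast}\Omega_\star)_L$, and the direct limit is $L\mapsto\bigcup_n(\sum_{n\ast}\Omega_\star)_L$. *)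

(* Defs.v *)
From Stdlib Require Import Reals List.
From Coquelicot Require Import Coquelicot.
Open Scope R_scope.

Definition finite_set (S : C -> Prop) : Prop :=
  exists l : list C, forall z, S z <-> In z l.

Definition open_disc (w : C) (L : R) (z : C) : Prop := Cmod (Cminus z w) < L.

(* A family L |-> Om L of subsets of C, indexed by L > 0 (values at L <= 0
   are irrelevant). *)
Definition discrete_filtered_set (w : C) (Om : R -> C -> Prop) : Prop :=
  (forall L, 0 < L -> finite_set (Om L)) /\
  (forall L, 0 < L -> forall z, Om L z -> open_disc w L z) /\
  (forall L1 L2, 0 < L1 -> L1 <= L2 -> forall z, Om L1 z -> Om L2 z) /\
  (exists eps, 0 < eps /\ forall L, 0 < L -> L < eps -> forall z, Om L z <-> z = w).

Definition fine_sum (w : C) (Om Om' : R -> C -> Prop) (L : R) (z : C) : Prop :=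
  exists L1 L2 z1 z2, 0 < L1 /\ 0 < L2 /\ L1 + L2 = L /\
    Om L1 z1 /\ Om' L2 z2 /\ z = Cplus (Cplus (Copp w) z1) z2.

(* iter_fine_sum w Om n = the (n+1)-fold fine sum  Om * ... * Om. *)
Fixpoint iter_fine_sum (w : C) (Om : R -> C -> Prop) (n : nat) : R -> C -> Prop :=
  match n with
  | O => Om
  | S k => fine_sum w (iter_fine_sum w Om k) Om
  end.

(* Direct limit: L |-> union over n >= 1 of the n-fold fine sums at level L. *)
Definition fine_sum_limit (w : C) (Om : R -> C -> Prop) (L : R) (z : C) : Prop :=
  exists n : nat, iter_fine_sum w Om n L z.

(* Main.v *)
Require Import Defs.
From Stdlib Require Import Reals List Lra Classical.
From Coquelicot Require Import Coquelicot.

Lemma C_id1 (w z : C) : Cplus (Cplus (Copp w) w) z = z.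
Proof. destruct w, z; unfold Cplus, Copp; simpl; f_equal; ring. Qed.

Lemma C_id2 (w z1 : C) : Cplus (Cplus (Copp w) z1) w = z1.
Proof. destruct w, z1; unfold Cplus, Copp; simpl; f_equal; ring. Qed.

Lemma C_id3 (w z1 z2 : C) :
  Cminus (Cplus (Cplus (Copp w) z1) z2) w = Cplus (Cminus z1 w) (Cminus z2 w).
Proof. destruct w, z1, z2; unfold Cminus, Cplus, Copp; simpl; f_equal; ring. Qed.

Lemma sub_finite (S : C -> Prop) (l : list C) :
  (forall z, S z -> In z l) -> finite_set S.
Proof.
  revert S; induction l as [|a l IH]; intros S H.
  - exists nil; intros z; split; [intros Hz; exact (H z Hz) | intros []].
  - destruct (IH (fun z => S z /\ z <> a)) as [l' Hl'].
    { intros z [Hz Hne]; destruct (H z Hz) as [->|Hi]; [congruence|exact Hi]. }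
    destruct (classic (S a)) as [Ha|Ha].
    + exists (a :: l'); intros z; split.
      * intros Hz; destruct (classic (z = a)) as [->|Hne]; [left; reflexivity|].
        right; apply Hl'; auto.
      * intros [<-|Hi]; [exact Ha|apply Hl' in Hi; tauto].
    + exists l'; intros z; split.
      * intros Hz; apply Hl'; split; [exact Hz|intros ->; contradiction].
      * intros Hi; apply Hl' in Hi; tauto.
Qed.

Section S.
Variable w : C.
Variable Om : R -> C -> Prop.

Lemma iter_pos n L z : iter_fine_sum w Om n L z ->
  (forall L, 0 < L -> forall z, Om L z -> open_disc w L z) ->
  0 < L -> open_disc w L z.
Proof.
  intros H Hd; revert L z H; induction n as [|n IH]; intros L z H HL; simpl in H.
  - exact (Hd L HL z H).
  - destruct H as (L1 & L2 & z1 & z2 & H1 & H2 & HL12 & Hz1 & Hz2 & ->).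
    unfold open_disc; rewrite C_id3.
    eapply Rle_lt_trans; [apply Cmod_triangle|].
    specialize (IH L1 z1 Hz1 H1); specialize (Hd L2 H2 z2 Hz2).
    unfold open_disc in *; lra.
Qed.

Lemma iter_mono n L1 L2 z :
  (forall L1 L2, 0 < L1 -> L1 <= L2 -> forall z, Om L1 z -> Om L2 z) ->
  0 < L1 -> L1 <= L2 -> iter_fine_sum w Om n L1 z -> iter_fine_sum w Om n L2 z.
Proof.
  intros Hm H1 H12 H; destruct n as [|n]; simpl in *.
  - exact (Hm L1 L2 H1 H12 z H).
  - destruct H as (A & B & z1 & z2 & HA & HB & HAB & Hz1 & Hz2 & ->).
    exists A, (B + (L2 - L1)), z1, z2; repeat split; try lra; auto.
    apply (Hm B); auto; lra.
Qed.

Lemma iter_small eps n L z :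
  (forall L, 0 < L -> L < eps -> forall z, Om L z <-> z = w) ->
  0 < L -> L < eps -> iter_fine_sum w Om n L z -> z = w.
Proof.
  intros He; revert L z; induction n as [|n IH]; intros L z HL HLe H; simpl in H.
  - exact (proj1 (He L HL HLe z) H).
  - destruct H as (A & B & z1 & z2 & HA & HB & HAB & Hz1 & Hz2 & ->).
    rewrite (IH A z1 HA ltac:(lra) Hz1).
    rewrite (proj1 (He B HB ltac:(lra) z2) Hz2). apply C_id1.
Qed.

Variable l : list C.
Fixpoint T (m : nat) : list C :=
  match m with
  | O => w :: nil
  | S k => T k ++ flat_map (fun a => map (fun b => Cplus (Cplus (Copp w) a) b) l) (T k)
  end.

Lemma T_w m : In w (T m).
Proof. induction m; simpl; [left; reflexivity| apply in_or_app; left; auto]. Qed.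

Lemma T_S m a b : In a (T m) -> In b l -> In (Cplus (Cplus (Copp w) a) b) (T (S m)).
Proof.
  intros Ha Hb; simpl; apply in_or_app; right; apply in_flat_map.
  exists a; split; auto; apply in_map; auto.
Qed.

Lemma T_mono m z : In z (T m) -> In z (T (S m)).
Proof. intros; simpl; apply in_or_app; left; auto. Qed.

Lemma iter_T eps L n : 0 < eps ->
  (forall L, 0 < L -> L < eps -> forall z, Om L z <-> z = w) ->
  (forall L', 0 < L' -> L' <= L -> forall z, Om L' z -> In z l) ->
  forall m L' z, 0 < L' -> L' <= L -> L' < INR (S m) * eps ->
  iter_fine_sum w Om n L' z -> In z (T m).
Proof.
  intros Heps He Hl; induction n as [|n IH]; intros m L' z HL' HLL Hm H; simpl in H.
  - destruct (classic (z = w)) as [->|Hne]; [apply T_w|].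
    destruct m as [|m].
    + exfalso; simpl in Hm; apply Hne; apply (He L'); auto; lra.
    + rewrite <- (C_id1 w z); apply T_S; [apply T_w|]. eapply Hl; eauto.
  - destruct H as (A & B & z1 & z2 & HA & HB & HAB & Hz1 & Hz2 & ->).
    destruct (classic (z2 = w)) as [->|Hne].
    + rewrite C_id2; apply (IH m A); auto; lra.
    + assert (eps <= B).
      { destruct (Rlt_le_dec B eps) as [h|h]; auto.
        exfalso; apply Hne; apply (He B); auto. }
      destruct m as [|m].
      * simpl in Hm; lra.
      * apply T_S.
        -- apply (IH m A); auto; try lra. rewrite S_INR in Hm; lra.
        -- eapply Hl; [exact HB| lra | exact Hz2].
Qed.
End S.

Theorem proposition2p4 (w : C) (Om : R -> C -> Prop) :
  discrete_filtered_set w Om ->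
  discrete_filtered_set w (fine_sum_limit w Om).
Proof.
  intros (Hf & Hd & Hm & eps & Heps & He).
  split; [|split; [|split]].
  - intros L HL. destruct (Hf L HL) as [l Hl].
    destruct (INR_archimed eps L (Rlt_gt _ _ Heps)) as [m Hmm].
    apply (sub_finite _ (T w l m)).
    intros z [n Hn].
    apply (iter_T w Om l eps L n Heps He) with (L' := L); auto; try lra.
    + intros L' H1 H2 z' Hz'. apply Hl. apply (Hm L'); auto.
    + rewrite S_INR; lra.
  - intros L HL z [n Hn]. eapply iter_pos; eauto.
  - intros L1 L2 H1 H12 z [n Hn]. exists n. eapply iter_mono; eauto.
  - exists eps; split; auto. intros L HL HLe z; split.
    + intros [n Hn]; eapply iter_small; eauto.
    + intros ->; exists O; simpl; apply (He L); auto.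
Qed.
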